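(* Let $\|\cdot\|$ be a norm on $\mathbf{R}^p$ with dual norm $\|\cdot\|_*$, let $0\le v\le 1$, $M_v>0$, and let $g_0,\dots,g_T:\mathbf{R}^p\to\mathbf{R}$ be convex functions such that each $g_t$ has H\''older continuous (sub)gradients of degree $v$ with constant $M_v(g_t)<M_v$, i.e. $\|\nabla g_t(x)-\nabla g_t(y)\|_*\le M_v(g_t)\|x-y\|^v$ for all $x,y$. Let $h$ be a simple convex function and set $f_{g_t}(x)=g_t(x)+h(x)$. Let $x^*$ be a solution of $\min_x \frac{1}{T+1}\sum_{t=0}^T g_t(x)+h(x)$. Let the sequence $\{x_t\}$ and the numbers $L_t$ be generated by the general O-UPGM described in the context (with inputs $L_0>0$, $\epsilon>0$, starting point $x_0$). Then $$\sum_{t=0}^{T}\frac{1}{L_{t+1}}\bigl[f_{g_t}(x_{t+1})-f_{g_t}(x^* )\bigr]\le \frac{\epsilon}{2}S_T+2r_0(x^* ),$$ where $S_T=\sum_{t=1}^{T+1}\frac{1}{L_t}$ and $r_0(y)=\xi(x_0,y)$.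
   Context: A prox-function $d:\mathbf{R}^p\to\mathbf{R}$ is differentiable, strongly convex with convexity parameter $1$ with respect to $\|\cdot\|$, and has minimum value $0$. The Bregman distance is $\xi(x,y)=d(y)-d(x)-\langle\nabla d(x),y-x\rangle$. $\nabla g$ denotes a gradient, or any subgradient when $g$ is nonsmooth. For $M>0$ and a function $g$, the Bregman mapping is $\mathfrak{B}_{M,g}(x)=\arg\min_y\bigl[g(x)+\langle\nabla g(x),y-x\rangle+M\xi(y,x)+h(y)\bigr]$. General O-UPGM: given $L_0>0$, $\epsilon>0$ and $x_0$, for $t=0,1,\dots,T$: find the smallest integer $i_t\ge 0$ such that $\hat x=\mathfrak{B}_{2^{i_t}L_t,g_t}(x_t)$ satisfies $g_t(\hat x)+h(\hat x)\le g_t(x_t)+\langle\nabla g_t(x_t),\hat x-x_t\rangle+2^{i_t}L_t\xi(\hat x,x_t)+h(\hat x)+\frac{\epsilon}{2}$; then set $x_{t+1}=\hat x$ and $L_{t+1}=2^{i_t-1}L_t$. The output is $\bar x=\frac{1}{S_T}\sum_{t=1}^{T+1}\frac{1}{L_t}x_t$. *)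

(* Defs.v *)
From HB Require Import structures.
From mathcomp Require Import all_boot all_order all_algebra.
From mathcomp Require Import all_classical all_reals all_analysis.
Set Implicit Arguments. Unset Strict Implicit. Unset Printing Implicit Defensive.
Import Order.TTheory GRing.Theory Num.Theory.
Import numFieldNormedType.Exports.
Local Open Scope classical_set_scope.
Local Open Scope ring_scope.

Section Defs.
Variables (R : realType) (p : nat).
Notation vec := 'rV[R]_p.

Definition dotp (s x : vec) : R := \sum_(i < p) s 0 i * x 0 i.

Definition is_norm (nrm : vec -> R) : Prop :=
  [/\ forall x, 0 <= nrm x,
      forall x, nrm x = 0 -> x = 0,
      forall (a : R) x, nrm (a *: x) = `|a| * nrm x
    & forall x y, nrm (x + y) <= nrm x + nrm y].

Definition dual_norm (nrm : vec -> R) (s : vec) : R :=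
  sup [set dotp s x | x in [set x | nrm x <= 1]].

Definition convex_fun (f : vec -> R) : Prop :=
  forall (x y : vec) (l : R), 0 <= l <= 1 ->
    f (l *: x + (1 - l) *: y) <= l * f x + (1 - l) * f y.

Definition is_subgrad (f : vec -> R) (gf : vec -> vec) : Prop :=
  forall x y, f x + dotp (gf x) (y - x) <= f y.

Definition is_gradient (d : vec -> R) (gd : vec -> vec) : Prop :=
  forall x, differentiable d x /\ forall h, 'd d x h = dotp (gd x) h.

Definition prox_function (nrm : vec -> R) (d : vec -> R) (gd : vec -> vec) : Prop :=
  [/\ is_gradient d gd,
      (forall x y, d x + dotp (gd x) (y - x) + 2^-1 * (nrm (y - x)) ^+ 2 <= d y),
      (forall x, 0 <= d x) & (exists x, d x = 0)].

Definition bregman (d : vec -> R) (gd : vec -> vec) (x y : vec) : R :=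
  d y - d x - dotp (gd x) (y - x).

Definition holder_grad (nrm : vec -> R) (gf : vec -> vec) (v M : R) : Prop :=
  forall x y, dual_norm nrm (gf x - gf y) <= M * (nrm (x - y)) `^ v.

Definition bregman_map (d : vec -> R) (gd : vec -> vec) (h : vec -> R)
  (M : R) (g : vec -> R) (gg : vec -> vec) (x y : vec) : Prop :=
  forall z, g x + dotp (gg x) (y - x) + M * bregman d gd x y + h y
            <= g x + dotp (gg x) (z - x) + M * bregman d gd x z + h z.

Definition upgm_test (d : vec -> R) (gd : vec -> vec) (h : vec -> R)
  (M eps : R) (g : vec -> R) (gg : vec -> vec) (x xh : vec) : Prop :=
  g xh + h xh <= g x + dotp (gg x) (xh - x) + M * bregman d gd x xh + h xh + eps / 2.

Definition O_UPGM (d : vec -> R) (gd : vec -> vec) (h : vec -> R)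
  (g : nat -> vec -> R) (gg : nat -> vec -> vec) (L0 eps : R) (x0 : vec) (T : nat)
  (x : nat -> vec) (L : nat -> R) (i : nat -> nat) : Prop :=
  [/\ x 0%N = x0, L 0%N = L0 &
     forall t, (t <= T)%N ->
       [/\ (forall j, (j < i t)%N -> forall y,
              bregman_map d gd h (2 ^+ j * L t) (g t) (gg t) (x t) y ->
              ~ upgm_test d gd h (2 ^+ j * L t) eps (g t) (gg t) (x t) y),
           bregman_map d gd h (2 ^+ i t * L t) (g t) (gg t) (x t) (x t.+1),
           upgm_test d gd h (2 ^+ i t * L t) eps (g t) (gg t) (x t) (x t.+1)
         & L t.+1 = 2 ^+ i t * L t / 2]].

End Defs.

(* Main.v *)
Require Import Defs.
From HB Require Import structures.
From mathcomp Require Import all_boot all_order all_algebra.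
From mathcomp Require Import all_classical all_reals all_analysis.
From mathcomp Require Import ring lra.
Import Order.TTheory GRing.Theory Num.Theory.
Import numFieldNormedType.Exports.
Local Open Scope classical_set_scope.
Local Open Scope ring_scope.

Section S.
Variables (R : realType) (p : nat).
Notation vec := 'rV[R]_p.

Lemma dotpD (s u w : vec) : dotp s (u + w) = dotp s u + dotp s w.
Proof. by rewrite /dotp -big_split; apply: eq_bigr => i _; rewrite mxE mulrDr. Qed.
Lemma dotpZ (s u : vec) a : dotp s (a *: u) = a * dotp s u.
Proof. by rewrite /dotp mulr_sumr; apply: eq_bigr => i _; rewrite mxE mulrCA. Qed.

Lemma lim_quot (d : vec -> R) gd (y w : vec) : is_gradient d gd ->
  (fun l : R => l^-1 * (d (l *: w + y) - d y)) @ (0:R)^'+ --> dotp (gd y) w.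
Proof.
move=> /(_ y) [dd dE].
have := @diff_derivable _ _ _ _ _ w dd.
rewrite /derivable => /cvg_ex [l Hl].
have : 'D_w d y = l by exact: cvg_lim.
rewrite deriveE // dE => Hdl.
rewrite Hdl.
move=> P /Hl; rewrite /= /within /=.
move=> -[e /= e0 He]; exists e => //= u Hu u0.
exact: (He u Hu (lt0r_neq0 u0)).
Qed.

Lemma vec_aff (a b c : vec) (l : R) :
  l *: a + (1 - l) *: b - c = l *: (a - c) + (1 - l) *: (b - c).
Proof.
by rewrite !scalerBr addrACA -opprD -scalerDl addrCA subrr addr0 scale1r.
Qed.

Lemma dotp_aff (s a b c : vec) (l : R) :
  dotp s (l *: a + (1 - l) *: b - c) = l * dotp s (a - c) + (1 - l) * dotp s (b - c).
Proof.
rewrite /dotp !mulr_sumr -big_split; apply: eq_bigr => i _; rewrite !mxE.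
rewrite /=.
ring.
Qed.

Lemma three_point d gd h (M : R) g gg (x y : vec) :
  is_gradient d gd -> convex_fun h -> 0 < M -> bregman_map d gd h M g gg x y ->
  forall z, g x + dotp (gg x) (y - x) + M * bregman d gd x y + h y + M * bregman d gd y z
   <= g x + dotp (gg x) (z - x) + M * bregman d gd x z + h z.
Proof.
move=> Hg Hh M0 Hb z.
set w := z - y.
rewrite -subr_le0; set A := _ - _.
have key : forall l, 0 < l -> l < 1 ->
    A / M + dotp (gd y) w <= l^-1 * (d (l *: w + y) - d y).
  move=> l l0 l1.
  have Hzl : l *: w + y = l *: z + (1 - l) *: y.
    by rewrite /w scalerBr scalerBl scale1r -addrA [- _ + _]addrC.
  have Hbm := Hb (l *: w + y).
  have hc := Hh z y l.
  have /hc {}hc : 0 <= l <= 1 by rewrite (ltW l0) (ltW l1).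
  move: Hbm; rewrite /bregman Hzl !dotp_aff => Hbm.
  set D := d (l *: z + (1 - l) *: y) in Hbm *.
  have Hq : l * (l^-1 * (D - d y)) = D - d y by rewrite mulrA mulfV ?mul1r ?lt0r_neq0.
  rewrite -(ler_pM2l l0) Hq.
  rewrite -(ler_pM2l M0).
  have Hc : dotp (gd y) w = dotp (gd y) (z - y) by [].
  rewrite /A /bregman.
  set c := dotp (gd y) w.
  set E := (_ - _) / M.
  have -> : M * (l * (E + c)) = l * (M * E) + M * l * c by ring.
  have -> : M * E = (E * M) by rewrite mulrC.
  rewrite /E mulfVK ?lt0r_neq0 //.
  nra.
have Hlim := @lim_quot d gd y w Hg.
have : A / M + dotp (gd y) w <= dotp (gd y) w.
  apply: (cvgr_to_ge Hlim).
  near=> l; apply: key.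
    by near: l; exact: nbhs_right_gt.
  by near: l; exact: nbhs_right_lt ltr01.
move=> H0; have HA : A / M <= 0 by lra.
have -> : A = A / M * M by rewrite mulfVK ?lt0r_neq0.
by rewrite pmulr_lle0.
Unshelve. all: by end_near.
Qed.
End S.

Theorem theorem1 (R : realType) (p : nat) (nrm : 'rV[R]_p -> R)
  (d : 'rV[R]_p -> R) (gd : 'rV[R]_p -> 'rV[R]_p)
  (v Mv : R) (T : nat) (g : nat -> 'rV[R]_p -> R) (gg : nat -> 'rV[R]_p -> 'rV[R]_p)
  (Mvg : nat -> R) (h : 'rV[R]_p -> R) (xs : 'rV[R]_p)
  (L0 eps : R) (x0 : 'rV[R]_p)
  (x : nat -> 'rV[R]_p) (L : nat -> R) (i : nat -> nat) :
  is_norm nrm ->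
  prox_function nrm d gd ->
  0 <= v <= 1 -> 0 < Mv ->
  (forall t, (t <= T)%N ->
     [/\ convex_fun (g t), is_subgrad (g t) (gg t),
         holder_grad nrm (gg t) v (Mvg t) & Mvg t < Mv]) ->
  convex_fun h ->
  (forall y, (T.+1%:R)^-1 * (\sum_(0 <= t < T.+1) g t xs) + h xs
             <= (T.+1%:R)^-1 * (\sum_(0 <= t < T.+1) g t y) + h y) ->
  0 < L0 -> 0 < eps ->
  O_UPGM d gd h g gg L0 eps x0 T x L i ->
  \sum_(0 <= t < T.+1) (L t.+1)^-1 * ((g t (x t.+1) + h (x t.+1)) - (g t xs + h xs))
    <= eps / 2 * (\sum_(1 <= t < T.+2) (L t)^-1) + 2 * bregman d gd x0 xs.
Proof.
move=> _ [Hgrad Hsc _ _] _ _ Hg Hh _ HL0 Heps [Hx0 HLz Hst].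
have Lpos : forall t, (t <= T.+1)%N -> 0 < L t.
  elim=> [|t IH] Ht; first by rewrite HLz.
  have [_ _ _ ->] := Hst t Ht.
  by rewrite divr_gt0 // mulr_gt0 ?exprn_gt0 ?IH // ltnW.
have bnn : forall a b, 0 <= bregman d gd a b.
  move=> a b; rewrite /bregman.
  have := Hsc a b; have := sqr_ge0 (nrm (b - a)); lra.
set b := fun t => bregman d gd (x t) xs.
have step : forall t, (t <= T)%N ->
   (L t.+1)^-1 * ((g t (x t.+1) + h (x t.+1)) - (g t xs + h xs))
   <= eps / 2 * (L t.+1)^-1 + 2 * b t - 2 * b t.+1.
  move=> t Ht.
  have [_ Hbm Htest HLs] := Hst t Ht.
  have [_ Hsub _ _] := Hg t Ht.
  have Lp : 0 < L t.+1 by apply: Lpos.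
  set M := 2 ^+ i t * L t in Hbm Htest HLs.
  have HM : M = 2 * L t.+1 by rewrite HLs; field.
  have M0 : 0 < M by rewrite HM mulr_gt0.
  have H3 := @three_point R p d gd h M (g t) (gg t) (x t) (x t.+1) Hgrad Hh M0 Hbm xs.
  have Hs := Hsub (x t) xs.
  move: Htest; rewrite /upgm_test => Htest.
  have HD : (g t (x t.+1) + h (x t.+1)) - (g t xs + h xs)
     <= eps / 2 + M * (b t - b t.+1).
    rewrite /b mulrBr; move: H3 Hs Htest; rewrite /bregman; lra.
  have -> : eps / 2 * (L t.+1)^-1 + 2 * b t - 2 * b t.+1 =
     (L t.+1)^-1 * (eps / 2 + M * (b t - b t.+1)).
    rewrite HM.
    by field; rewrite lt0r_neq0.
  by rewrite ler_wpM2l // invr_ge0 ltW.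
have sumI : forall n, (n <= T.+1)%N ->
  \sum_(0 <= t < n) (L t.+1)^-1 * ((g t (x t.+1) + h (x t.+1)) - (g t xs + h xs))
    <= eps / 2 * (\sum_(0 <= t < n) (L t.+1)^-1) + 2 * b 0%N - 2 * b n.
  elim=> [|n IH] Hn.
    by rewrite !big_geq // mulr0 add0r subrr.
  rewrite !big_nat_recr //= (mulrDr (eps / 2)).
  have := IH (ltnW Hn); have := step n Hn.
  set A1 := \sum_(0 <= t < n) (L t.+1)^-1 * _.
  set A2 := \sum_(0 <= t < n) (L t.+1)^-1.
  move=> H1 H2.
  set B := (L n.+1)^-1 * _ in H1 *.
  set e2 := eps / 2 in H1 H2 *.
  set r := e2 / L n.+1 in H1 *.
  have -> : e2 * A2 + r + 2 * b 0%N - 2 * b n.+1 = (e2 * A2 + 2 * b 0%N - 2 * b n) + (r + 2 * b n - 2 * b n.+1) by ring.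
  exact: lerD.
have := sumI T.+1 (leqnn _).
rewrite big_add1 /b Hx0.
have := bnn (x T.+1) xs => /=; lra.
Qed.
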